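(* Let $L>0,\alpha>0$. For any $b\in\Lambda(\alpha)$ and $\lambda>0$, $-\alpha\ge\mu(\lambda,b)\ge-\alpha-\alpha^2L^2$.
   Context: $\Lambda(\alpha)$: $b\in C^1(\mathbb R)$, $b\ge0$, $L$-periodic, $\int_0^Lb=\alpha L$. $\mu(\lambda,b)$ denotes the principal eigenvalue of $-\psi''+2\lambda\psi'-b\psi=\mu\psi$, i.e. the eigenvalue admitting a positive $L$-periodic eigenfunction $\psi$. *)

(* Defs.v *)
From Stdlib Require Import Reals.
From Coquelicot Require Import Coquelicot.
Open Scope R_scope.

Definition periodic (L : R) (f : R -> R) : Prop := forall x, f (x + L) = f x.

Definition C1 (f : R -> R) : Prop :=
  forall x, ex_derive f x /\ continuous (Derive f) x.

Definition in_Lambda (L alpha : R) (b : R -> R) : Prop :=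
  C1 b /\ (forall x, 0 <= b x) /\ periodic L b /\ RInt b 0 L = alpha * L.

(* mu is the principal eigenvalue of -psi'' + 2 lambda psi' - b psi = mu psi:
   it admits a positive L-periodic (twice differentiable) eigenfunction psi. *)
Definition is_principal_eigenvalue (L lambda : R) (b : R -> R) (mu : R) : Prop :=
  exists psi : R -> R,
    (forall x, ex_derive psi x) /\
    (forall x, ex_derive (Derive psi) x) /\
    periodic L psi /\
    (forall x, 0 < psi x) /\
    (forall x, - Derive (Derive psi) x + 2 * lambda * Derive psi x - b x * psi x
               = mu * psi x).

(* Main.v *)
Require Import Defs.
From Stdlib Require Import Reals Lra Psatz.
From Coquelicot Require Import Coquelicot.
Open Scope R_scope.

Lemma der_cont (f : R -> R) (df : R) x : is_derive f x df -> continuity_pt f x.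
Proof.
  intro H. apply continuity_pt_filterlim.
  apply (ex_derive_continuous (K:=R_AbsRing) (V:=R_NormedModule) f x).
  exists df; exact H.
Qed.

Lemma dplus (f g : R -> R) x a c : is_derive f x a -> is_derive g x c ->
  is_derive (fun y => f y + g y) x (a + c).
Proof. intros; apply (is_derive_plus (K:=R_AbsRing) (V:=R_NormedModule)); auto. Qed.
Lemma dminus (f g : R -> R) x a c : is_derive f x a -> is_derive g x c ->
  is_derive (fun y => f y - g y) x (a - c).
Proof. intros; apply (is_derive_minus (K:=R_AbsRing) (V:=R_NormedModule)); auto. Qed.
Lemma dscal (f : R -> R) k x a : is_derive f x a ->
  is_derive (fun y => k * f y) x (k * a).
Proof. intros. apply (is_derive_scal f x k a); auto. Qed.
Lemma dopp (f : R -> R) x a : is_derive f x a ->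
  is_derive (fun y => - f y) x (- a).
Proof. intros. apply (is_derive_opp (K:=R_AbsRing) (V:=R_NormedModule)); auto. Qed.
Lemma did x : is_derive (fun y : R => y) x 1.
Proof. apply (is_derive_id (K:=R_AbsRing)). Qed.

Lemma mono (f df : R -> R) a c : a <= c -> (forall x, is_derive f x (df x)) ->
  (forall x, a <= x <= c -> 0 <= df x) -> f a <= f c.
Proof.
  intros Hac Hd Hp.
  destruct (MVT_gen f a c df) as [z [Hz E]].
  - intros; apply Hd.
  - intros; apply (der_cont f (df x)); apply Hd.
  - rewrite Rmin_left in Hz by lra. rewrite Rmax_right in Hz by lra.
    assert (0 <= df z) by (apply Hp; lra). nra.
Qed.

Lemma conc (lam mu m M t : R) : m <= t <= M ->
  0 <= - m*m + 2*lam*m - mu -> 0 <= - M*M + 2*lam*M - mu ->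
  0 <= - t*t + 2*lam*t - mu.
Proof.
  intros [H1 H2] Hm HM.
  destruct (Req_dec M m) as [E|E].
  - subst. assert (t = m) by lra. subst; lra.
  - assert (Hp : 0 < M - m) by lra.
    assert (Id : (M - m) * (- t*t + 2*lam*t - mu) =
      (- m*m + 2*lam*m - mu) * (M - t) + (- M*M + 2*lam*M - mu) * (t - m)
      + (M - m) * (t - m) * (M - t)) by ring.
    assert (0 <= (M - m) * (- t*t + 2*lam*t - mu)).
    { rewrite Id. assert (0 <= (M-m)*(t-m)*(M-t)).
      { apply Rmult_le_pos; [apply Rmult_le_pos|]; lra. }
      assert (0 <= (- m*m + 2*lam*m - mu) * (M - t)) by (apply Rmult_le_pos; lra).
      assert (0 <= (- M*M + 2*lam*M - mu) * (t - m)) by (apply Rmult_le_pos; lra).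
      lra. }
    nra.
Qed.

Theorem mainTheorem16 :
  forall (L alpha : R) (b : R -> R) (lambda mu : R),
    0 < L -> 0 < alpha ->
    in_Lambda L alpha b -> 0 < lambda ->
    is_principal_eigenvalue L lambda b mu ->
    - alpha >= mu /\ mu >= - alpha - alpha ^ 2 * L ^ 2.
Proof.
  intros L alpha b lam mu HL Ha [HC1 [Hb0 [Hbp Hint]]] Hlam
    [psi [Hd1 [Hd2 [Hpp [Hpos Heq]]]]].
  set (p1 := Derive psi). set (p2 := Derive p1).
  set (w := fun x => p1 x / psi x).
  set (B := fun x => RInt b 0 x).
  assert (bcont : forall x, continuous b x).
  { intro x. apply (ex_derive_continuous (K:=R_AbsRing) (V:=R_NormedModule) b x). apply HC1. }
  assert (dpsi : forall x, is_derive psi x (p1 x)).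
  { intro x. apply Derive_correct. apply Hd1. }
  assert (dp1 : forall x, is_derive p1 x (p2 x)).
  { intro x. apply Derive_correct. apply Hd2. }
  assert (dw : forall x, is_derive w x (2*lam*w x - b x - mu - w x * w x)).
  { intro x. assert (psi x <> 0) by (specialize (Hpos x); lra).
    eapply is_derive_ext_loc.
    { apply filter_forall. intro y. reflexivity. }
    replace (2*lam*w x - b x - mu - w x * w x) with
      ((p2 x * psi x - p1 x * p1 x) / psi x ^ 2).
    - apply is_derive_div; auto.
    - unfold w. specialize (Heq x). fold p1 p2 in Heq.
      assert (p2 x = 2*lam*p1 x - b x * psi x - mu * psi x) by lra.
      rewrite H0. field. auto. }
  assert (dB : forall x, is_derive B x (b x)).
  { intro x. apply (is_derive_RInt b B 0 x).
    - apply filter_forall. intro y. unfold B. apply (RInt_correct (V:=R_CompleteNormedModule)).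
      apply (ex_RInt_continuous (V:=R_CompleteNormedModule)). intros; apply bcont.
    - apply bcont. }
  assert (dln : forall x, is_derive (fun y => ln (psi y)) x (w x)).
  { intro x. eapply is_derive_ext.
    { intro y. reflexivity. }
    replace (w x) with (scal (p1 x) (/ psi x)).
    - apply (is_derive_comp ln psi x). apply is_derive_ln. apply Hpos. apply dpsi.
    - unfold w, scal; simpl; unfold mult; simpl. field. specialize (Hpos x); lra. }
  assert (B0 : B 0 = 0). { unfold B. rewrite RInt_point. reflexivity. }
  assert (BL : B L = alpha * L). { unfold B. exact Hint. }
  assert (Bmono : forall x y, x <= y -> B x <= B y).
  { intros x y Hxy. apply (mono B b); auto. }
  assert (p1per : forall x, p1 (x + L) = p1 x).
  { intro x.
    assert (D2 : is_derive (fun y => psi (y + L)) x (p1 x)).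
    { eapply is_derive_ext. { intro y. symmetry. apply Hpp. } apply dpsi. }
    assert (D1 : is_derive (fun y => psi (y + L)) x (p1 (x + L))).
    { replace (p1 (x + L)) with (scal 1 (p1 (x+L))).
      + apply (is_derive_comp psi (fun y => y + L)). apply dpsi.
        auto_derive; auto; ring.
      + unfold scal; simpl; unfold mult; simpl; ring. }
    rewrite <- (is_derive_unique _ _ _ D1). apply is_derive_unique; exact D2. }
  assert (wper : forall x, w (x + L) = w x).
  { intro x. unfold w. rewrite p1per, Hpp. reflexivity. }
  assert (wper' : forall x, w (x - L) = w x).
  { intro x. rewrite <- (wper (x - L)). f_equal. ring. }
  assert (wcont : forall x, continuity_pt w x).
  { intro x. apply (der_cont w _ x (dw x)). }
  destruct (continuity_ab_maj w 0 L) as [xM [HM HxM]]; [lra| intros; apply wcont |].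
  destruct (continuity_ab_min w 0 L) as [xm [Hm Hxm]]; [lra| intros; apply wcont |].
  set (M := w xM). set (m := w xm).
  assert (wle : forall x, -L < x < 2*L -> w x <= M).
  { intros x Hx. destruct (Rle_dec x 0).
    - rewrite <- wper. apply HM; lra.
    - destruct (Rle_dec x L). apply HM; lra.
      rewrite <- wper'. apply HM; lra. }
  assert (wge : forall x, -L < x < 2*L -> m <= w x).
  { intros x Hx. destruct (Rle_dec x 0).
    - rewrite <- wper. apply Hm; lra.
    - destruct (Rle_dec x L). apply Hm; lra.
      rewrite <- wper'. apply Hm; lra. }
  assert (qM : 0 <= - M*M + 2*lam*M - mu).
  { assert (pr : derivable_pt w xM).
    { exists (2*lam*w xM - b xM - mu - w xM * w xM). apply is_derive_Reals, dw. }
    pose proof (deriv_maximum w (-L) (2*L) xM pr ltac:(lra) ltac:(lra)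
      ltac:(intros; apply wle; lra)) as D.
    rewrite (derive_pt_eq_0 w xM _ pr) in D by (apply is_derive_Reals, dw).
    specialize (Hb0 xM). unfold M. lra. }
  assert (qm : 0 <= - m*m + 2*lam*m - mu).
  { assert (pr : derivable_pt w xm).
    { exists (2*lam*w xm - b xm - mu - w xm * w xm). apply is_derive_Reals, dw. }
    pose proof (deriv_minimum w (-L) (2*L) xm pr ltac:(lra) ltac:(lra)
      ltac:(intros; apply wge; lra)) as D.
    rewrite (derive_pt_eq_0 w xm _ pr) in D by (apply is_derive_Reals, dw).
    specialize (Hb0 xm). unfold m. lra. }
  assert (Fd : forall x, 0 <= x <= L -> 0 <= (2*lam*w x - b x - mu - w x * w x) + b x).
  { intros x Hx. assert (0 <= - w x * w x + 2*lam*w x - mu).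
    { apply (conc lam mu m M); auto. }
    lra. }
  assert (Fmono : forall x y, 0 <= x -> x <= y -> y <= L -> w x + B x <= w y + B y).
  { intros x y H1 H2 H3.
    apply (mono (fun z => w z + B z) (fun z => (2*lam*w z - b z - mu - w z * w z) + b z)); auto.
    - intro z. apply (is_derive_plus (K:=R_AbsRing) (V:=R_NormedModule) w B z _ _ (dw z) (dB z)).
    - intros; apply Fd; lra. }
  assert (Hdiff : M - m <= alpha * L).
  { destruct (Rle_dec xM xm).
    - pose proof (Fmono xM xm ltac:(lra) r ltac:(lra)).
      pose proof (Bmono 0 xM ltac:(lra)). pose proof (Bmono xm L ltac:(lra)).
      unfold M, m. lra.
    - pose proof (Fmono xM L ltac:(lra) ltac:(lra) ltac:(lra)).
      pose proof (Fmono 0 xm ltac:(lra) ltac:(lra) ltac:(lra)).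
      pose proof (Bmono xm xM ltac:(lra)).
      assert (w L = w 0) by (rewrite <- (wper 0); f_equal; ring).
      unfold M, m. lra. }
  assert (Hz : m <= 0 <= M).
  { destruct (MVT_gen psi 0 L p1) as [c [Hc E]].
    - intros; apply dpsi.
    - intros; apply (der_cont psi (p1 x)); apply dpsi.
    - rewrite Rmin_left in Hc by lra. rewrite Rmax_right in Hc by lra.
      assert (psi L = psi 0) by (rewrite <- (Hpp 0); f_equal; ring).
      assert (p1 c = 0) by nra.
      assert (w c = 0) by (unfold w; rewrite H0; unfold Rdiv; ring).
      split; [rewrite <- H1; apply Hm | rewrite <- H1; apply HM]; auto. }
  assert (wsq : forall x, 0 <= x <= L -> w x * w x <= alpha^2 * L^2).
  { intros x Hx. pose proof (Hm x Hx). pose proof (HM x Hx).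
    assert (A1 : - (alpha*L) <= w x <= alpha * L).
    { unfold M, m in *. lra. }
    assert (w x * w x <= (alpha*L)*(alpha*L)) by nra.
    replace (alpha^2*L^2) with ((alpha*L)*(alpha*L)) by ring. exact H1. }
  set (H := fun x => w x - 2*lam*ln (psi x) + B x + mu * x).
  assert (dH : forall x, is_derive H x (- (w x * w x))).
  { intro x. unfold H.
    replace (- (w x * w x)) with
      ((2*lam*w x - b x - mu - w x * w x) - 2*lam * w x + b x + mu * 1) by ring.
    apply dplus. apply dplus. apply dminus.
    - apply dw.
    - apply (dscal (fun y => ln (psi y))). apply dln.
    - apply dB.
    - apply (dscal (fun y => y)). apply did. }
  assert (H0v : H 0 = w 0 - 2*lam*ln (psi 0)) by (unfold H; rewrite B0; ring).
  assert (HLv : H L = w 0 - 2*lam*ln (psi 0) + alpha*L + mu*L).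
  { unfold H. rewrite BL. assert (w L = w 0) by (rewrite <- (wper 0); f_equal; ring).
    assert (psi L = psi 0) by (rewrite <- (Hpp 0); f_equal; ring).
    rewrite H0, H1. ring. }
  split.
  - pose proof (mono (fun x => - H x) (fun x => w x * w x) 0 L ltac:(lra)
      ltac:(intro x; cbv beta; replace (w x * w x) with (- - (w x * w x)) by ring; apply (dopp H); apply dH)
      ltac:(intros; nra)).
    simpl in H0. assert ((alpha + mu) * L <= 0) by lra.
    assert (alpha + mu <= 0) by nra. lra.
  - pose proof (mono (fun x => H x + alpha^2*L^2 * x)
      (fun x => - (w x * w x) + alpha^2*L^2 * 1) 0 L ltac:(lra)
      ltac:(intro x; cbv beta; apply (dplus H); [apply dH | apply (dscal (fun y => y)); apply did])
      ltac:(intros x Hx; specialize (wsq x Hx); lra)).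
    simpl in H0. assert (0 <= (alpha + mu + alpha^2*L^2) * L) by nra.
    assert (0 <= alpha + mu + alpha^2*L^2) by nra. lra.
Qed.
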